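(* Assume $a/b>\sqrt2$, $|u|<u_{\max}$ and $a^2+(u^2-2)c^2\ne0$. Let $\mathcal{C}^\dagger$ be the unit circle centered at the focus $f_1=(-c,0)$. The images of the four vertices $P_1,\dots,P_4$ of the self-intersected 4-periodic under inversion in $\mathcal{C}^\dagger$ are collinear and lie on the radical axis of $\mathcal{C}^\dagger$ and $\mathcal{C}$; likewise the images of the four vertices of its outer polygon under inversion in $\mathcal{C}^\dagger$ are collinear and lie on the radical axis of $\mathcal{C}^\dagger$ and $\mathcal{C}'$.
   Context: The elliptic billiard is $\mathcal{E}: x^2/a^2+y^2/b^2=1$, $a>b>0$, $c=\sqrt{a^2-b^2}$, foci $f_1=(-c,0)$, $f_2=(c,0)$. For $a/b>\sqrt2$ the self-intersected 4-periodics are parametrized by $u$, $|u|\le u_{\max}:=\frac{a}{c^2}\sqrt{a^2-2b^2}$, with vertices $P_1=(au,\,b\sqrt{1-u^2})$, $P_3=(-au,\,b\sqrt{1-u^2})$, $P_2=\left(-\frac{a\sqrt{a^2(a^2-2b^2)-c^4u^2}}{c^2\sqrt{1-u^2}},-\frac{b^3}{c^2\sqrt{1-u^2}}\right)$, $P_4=\left(\frac{a\sqrt{a^2(a^2-2b^2)-c^4u^2}}{c^2\sqrt{1-u^2}},-\frac{b^3}{c^2\sqrt{1-u^2}}\right)$. The outer polygon has vertices $P_i'$ = intersection of the tangent lines to $\mathcal{E}$ at $P_i$ and $P_{i+1}$ (indices mod 4). $\mathcal{C}$ is the circle with center $C=\left(0,\frac{c^2u^2-a^2+2b^2}{2b\sqrt{1-u^2}}\right)$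 and radius $R=\frac{a^2-c^2u^2}{2b\sqrt{1-u^2}}$; $\mathcal{C}'$ is the circle with center $C'=\left(0,-\frac{2bc^2\sqrt{1-u^2}}{a^2+(u^2-2)c^2}\right)$ and radius $\left|\frac{c(c^2u^2-a^2)}{a^2+(u^2-2)c^2}\right|$. Inversion in a circle of center $Z$ and radius $\rho$ sends $X\neq Z$ to $Z+\rho^2(X-Z)/|X-Z|^2$. *)

(* Defs.v *)
From mathcomp Require Import all_boot all_order all_algebra.
Set Implicit Arguments. Unset Strict Implicit. Unset Printing Implicit Defensive.
Import Order.TTheory GRing.Theory Num.Theory.
Local Open Scope ring_scope.

Section Defs.
Variable R : rcfType.
Notation pt := (R * R)%type.

Definition cfoc (a b : R) : R := Num.sqrt (a ^+ 2 - b ^+ 2).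

Definition umax (a b : R) : R :=
  a / (cfoc a b) ^+ 2 * Num.sqrt (a ^+ 2 - 2 * b ^+ 2).

Definition P1 (a b u : R) : pt := (a * u, b * Num.sqrt (1 - u ^+ 2)).
Definition P3 (a b u : R) : pt := (- (a * u), b * Num.sqrt (1 - u ^+ 2)).
Definition P2 (a b u : R) : pt :=
  let c := cfoc a b in
  (- (a * Num.sqrt (a ^+ 2 * (a ^+ 2 - 2 * b ^+ 2) - c ^+ 4 * u ^+ 2))
       / (c ^+ 2 * Num.sqrt (1 - u ^+ 2)),
   - (b ^+ 3) / (c ^+ 2 * Num.sqrt (1 - u ^+ 2))).
Definition P4 (a b u : R) : pt :=
  let c := cfoc a b in
  ((a * Num.sqrt (a ^+ 2 * (a ^+ 2 - 2 * b ^+ 2) - c ^+ 4 * u ^+ 2))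
       / (c ^+ 2 * Num.sqrt (1 - u ^+ 2)),
   - (b ^+ 3) / (c ^+ 2 * Num.sqrt (1 - u ^+ 2))).

Definition on_tangent (a b : R) (P X : pt) : Prop :=
  X.1 * P.1 / a ^+ 2 + X.2 * P.2 / b ^+ 2 = 1.

Definition Ccenter (a b u : R) : pt :=
  (0, ((cfoc a b) ^+ 2 * u ^+ 2 - a ^+ 2 + 2 * b ^+ 2) / (2 * b * Num.sqrt (1 - u ^+ 2))).
Definition Cradius (a b u : R) : R :=
  (a ^+ 2 - (cfoc a b) ^+ 2 * u ^+ 2) / (2 * b * Num.sqrt (1 - u ^+ 2)).

Definition C'center (a b u : R) : pt :=
  let c := cfoc a b in
  (0, - (2 * b * c ^+ 2 * Num.sqrt (1 - u ^+ 2)) / (a ^+ 2 + (u ^+ 2 - 2) * c ^+ 2)).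
Definition C'radius (a b u : R) : R :=
  let c := cfoc a b in
  `| c * (c ^+ 2 * u ^+ 2 - a ^+ 2) / (a ^+ 2 + (u ^+ 2 - 2) * c ^+ 2) |.

Definition sqdist (X Y : pt) : R := (X.1 - Y.1) ^+ 2 + (X.2 - Y.2) ^+ 2.

Definition inversion (Z : pt) (rho : R) (X : pt) : pt :=
  (Z.1 + rho ^+ 2 * (X.1 - Z.1) / sqdist X Z,
   Z.2 + rho ^+ 2 * (X.2 - Z.2) / sqdist X Z).

Definition power (Z : pt) (rho : R) (X : pt) : R := sqdist X Z - rho ^+ 2.

Definition on_radical_axis (Z1 : pt) (r1 : R) (Z2 : pt) (r2 : R) (X : pt) : Prop :=
  power Z1 r1 X = power Z2 r2 X.

Definition collinear (s : seq pt) : Prop :=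
  exists alpha beta gamma : R, (alpha, beta) != (0, 0) /\
    all (fun X : pt => alpha * X.1 + beta * X.2 == gamma) s.

End Defs.

(* Main.v *)
Require Import Defs.
From mathcomp Require Import all_boot all_order all_algebra.
From mathcomp Require Import ring lra.
Import Order.TTheory GRing.Theory Num.Theory.
Local Open Scope ring_scope.

Ltac fs := field; repeat (apply/andP; split); rewrite ?exprMn; try done.

Lemma pid_C1 {R : rcfType} {a b c s t u U w : R} :
  w^+2 - t^+2 = 0 -> t^+2 - (a^+2*(a^+2-2*b^+2) - c^+4*u^+2) = 0 ->
  U^+2 - u^+2 = 0 -> c^+2 - (a^+2-b^+2) = 0 -> s^+2 - (1-u^+2) = 0 ->
  (a^+2-c^+2*u^+2)^+2-(c^+2*u^+2-a^+2+2*b^+2)^+2-4*c^+2*b^+2*s^+2 = 0.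
Proof.
move=> h1 h2 h3 h4 h5.
transitivity ((- (4 * b^+2 * u^+2) + - (4 * b^+2 * s^+2)) * (c^+2 - (a^+2-b^+2)) + ((4 * b^+4) + - (4 * a^+2 * b^+2)) * (s^+2 - (1-u^+2))); first ring.
by rewrite ?h1 ?h2 ?h3 ?h4 ?h5; ring.
Qed.

Lemma pid_C2 {R : rcfType} {a b c s t u U w : R} :
  w^+2 - t^+2 = 0 -> t^+2 - (a^+2*(a^+2-2*b^+2) - c^+4*u^+2) = 0 ->
  U^+2 - u^+2 = 0 -> c^+2 - (a^+2-b^+2) = 0 -> s^+2 - (1-u^+2) = 0 ->
  c^+2*(c^+2*u^+2-a^+2)^+2-4*b^+2*c^+4*s^+2-c^+2*(a^+2+(u^+2-2)*c^+2)^+2 = 0.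
Proof.
move=> h1 h2 h3 h4 h5.
transitivity ((- (4 * c^+4) + (4 * c^+4 * u^+2) + (4 * b^+2 * c^+2) + - (4 * b^+2 * c^+2 * u^+2) + - (4 * b^+2 * c^+2 * s^+2) + - (4 * b^+4) + (4 * b^+4 * u^+2) + (4 * b^+4 * s^+2) + (4 * a^+2 * b^+2) + - (4 * a^+2 * b^+2 * u^+2) + - (4 * a^+2 * b^+2 * s^+2)) * (c^+2 - (a^+2-b^+2)) + (- (4 * b^+6) + (8 * a^+2 * b^+4) + - (4 * a^+4 * b^+2)) * (s^+2 - (1-u^+2))); first ring.
by rewrite ?h1 ?h2 ?h3 ?h4 ?h5; ring.
Qed.

Lemma pid_P1 {R : rcfType} {a b c s t u U w : R} :
  w^+2 - t^+2 = 0 -> t^+2 - (a^+2*(a^+2-2*b^+2) - c^+4*u^+2) = 0 ->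
  U^+2 - u^+2 = 0 -> c^+2 - (a^+2-b^+2) = 0 -> s^+2 - (1-u^+2) = 0 ->
  (a^+2*u^+2+b^+2*s^+2-c^+2)*2*b*s - 2*b*s*(c^+2*u^+2-a^+2+2*b^+2) = 0.
Proof.
move=> h1 h2 h3 h4 h5.
transitivity ((- (2 * b * s) + - (2 * b * s * u^+2)) * (c^+2 - (a^+2-b^+2)) + ((2 * b^+3 * s)) * (s^+2 - (1-u^+2))); first ring.
by rewrite ?h1 ?h2 ?h3 ?h4 ?h5; ring.
Qed.

Lemma pid_P2 {R : rcfType} {a b c s t u U w : R} :
  w^+2 - t^+2 = 0 -> t^+2 - (a^+2*(a^+2-2*b^+2) - c^+4*u^+2) = 0 ->
  U^+2 - u^+2 = 0 -> c^+2 - (a^+2-b^+2) = 0 -> s^+2 - (1-u^+2) = 0 ->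
  a^+2*w^+2+b^+6+b^+2*c^+2*(c^+2*u^+2-a^+2+2*b^+2)-c^+6*s^+2 = 0.
Proof.
move=> h1 h2 h3 h4 h5.
transitivity (((a^+2)) * (w^+2 - t^+2) + ((a^+2)) * (t^+2 - (a^+2*(a^+2-2*b^+2) - c^+4*u^+2)) + (- (c^+4 * s^+2) + (b^+2 * c^+2 * u^+2) + (b^+2 * c^+2 * s^+2) + (2 * b^+4) + - (b^+4 * u^+2) + - (b^+4 * s^+2) + - (a^+2 * c^+2 * u^+2) + - (a^+2 * c^+2 * s^+2) + - (a^+2 * b^+2) + (2 * a^+2 * b^+2 * u^+2) + (2 * a^+2 * b^+2 * s^+2) + - (a^+4 * u^+2) + - (a^+4 * s^+2)) * (c^+2 - (a^+2-b^+2)) + ((b^+6) + - (3 * a^+2 * b^+4) + (3 * a^+4 * b^+2) + - (a^+6)) * (s^+2 - (1-u^+2))); first ring.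
by rewrite ?h1 ?h2 ?h3 ?h4 ?h5; ring.
Qed.

Lemma pid_Q {R : rcfType} {a b c s t u U w : R} :
  w^+2 - t^+2 = 0 -> t^+2 - (a^+2*(a^+2-2*b^+2) - c^+4*u^+2) = 0 ->
  U^+2 - u^+2 = 0 -> c^+2 - (a^+2-b^+2) = 0 -> s^+2 - (1-u^+2) = 0 ->
  a^+2*(U*b^+2-s*w)^+2+b^+2*(s*(b^+2-c^+2)+U*w)^+2+4*b^+2*c^+2*s*(s*(b^+2-c^+2)+U*w)-c^+2*(b^+2 - c^+2*s^+2)^+2 = 0.
Proof.
move=> h1 h2 h3 h4 h5.
transitivity (((b^+2 * U^+2) + (a^+2 * s^+2)) * (w^+2 - t^+2) + ((b^+2 * U^+2) + (a^+2 * s^+2)) * (t^+2 - (a^+2*(a^+2-2*b^+2) - c^+4*u^+2)) + (- (b^+2 * c^+4 * u^+2) + - (a^+2 * b^+4) + (a^+4 * b^+2)) * (U^+2 - u^+2) + (- (c^+4 * s^+4) + (2 * b^+2 * s * U * w) + - (b^+2 * c^+2 * u^+4) + - (b^+2 * c^+2 * s^+2) + (b^+2 * c^+2 * s^+4) + - (b^+4) + (b^+4 * u^+4) + (3 * b^+4 * s^+2) + - (b^+4 * s^+4) + - (a^+2 * c^+2 * s^+2 * u^+2) + - (a^+2 * c^+2 * s^+4) + - (a^+2 * b^+2 * u^+4) + - (a^+2 * b^+2 * s^+2) + (a^+2 * b^+2 * s^+2 * u^+2) + (2 * a^+2 * b^+2 * s^+4) + - (a^+4 * s^+2 * u^+2)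 + - (a^+4 * s^+4)) * (c^+2 - (a^+2-b^+2)) + (- (b^+6) + - (b^+6 * u^+2) + (b^+6 * s^+2) + (a^+2 * b^+4) + (2 * a^+2 * b^+4 * u^+2) + - (3 * a^+2 * b^+4 * s^+2) + - (a^+4 * b^+2 * u^+2) + (3 * a^+4 * b^+2 * s^+2) + - (a^+6 * s^+2)) * (s^+2 - (1-u^+2))); first ring.
by rewrite ?h1 ?h2 ?h3 ?h4 ?h5; ring.
Qed.

Lemma pid_T1 {R : rcfType} {a b c s t u U w : R} :
  w^+2 - t^+2 = 0 -> t^+2 - (a^+2*(a^+2-2*b^+2) - c^+4*u^+2) = 0 ->
  U^+2 - u^+2 = 0 -> c^+2 - (a^+2-b^+2) = 0 -> s^+2 - (1-u^+2) = 0 ->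
  (U*b^+2-s*w)*U+(s*(b^+2-c^+2)+U*w)*s-(b^+2 - c^+2*s^+2) = 0.
Proof.
move=> h1 h2 h3 h4 h5.
transitivity (((b^+2)) * (U^+2 - u^+2) + ((b^+2)) * (s^+2 - (1-u^+2))); first ring.
by rewrite ?h1 ?h2 ?h3 ?h4 ?h5; ring.
Qed.

Lemma pid_T2 {R : rcfType} {a b c s t u U w : R} :
  w^+2 - t^+2 = 0 -> t^+2 - (a^+2*(a^+2-2*b^+2) - c^+4*u^+2) = 0 ->
  U^+2 - u^+2 = 0 -> c^+2 - (a^+2-b^+2) = 0 -> s^+2 - (1-u^+2) = 0 ->
  (U*b^+2-s*w)*w-b^+2*(s*(b^+2-c^+2)+U*w)-c^+2*s*(b^+2 - c^+2*s^+2) = 0.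
Proof.
move=> h1 h2 h3 h4 h5.
transitivity ((- (s)) * (w^+2 - t^+2) + (- (s)) * (t^+2 - (a^+2*(a^+2-2*b^+2) - c^+4*u^+2)) + ((c^+2 * s * u^+2) + (c^+2 * s^+3) + - (b^+2 * s * u^+2) + - (b^+2 * s^+3) + (a^+2 * s * u^+2) + (a^+2 * s^+3)) * (c^+2 - (a^+2-b^+2)) + ((b^+4 * s) + - (2 * a^+2 * b^+2 * s) + (a^+4 * s)) * (s^+2 - (1-u^+2))); first ring.
by rewrite ?h1 ?h2 ?h3 ?h4 ?h5; ring.
Qed.

Lemma pid_DET {R : rcfType} {a b c s t u U w : R} :
  w^+2 - t^+2 = 0 -> t^+2 - (a^+2*(a^+2-2*b^+2) - c^+4*u^+2) = 0 ->
  U^+2 - u^+2 = 0 -> c^+2 - (a^+2-b^+2) = 0 -> s^+2 - (1-u^+2) = 0 ->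
  (U*b^+2+s*w)*(U*b^+2-s*w)-(b^+2 - c^+2*s^+2)*(b^+2+c^+2*s^+2) = 0.
Proof.
move=> h1 h2 h3 h4 h5.
transitivity ((- (s^+2)) * (w^+2 - t^+2) + (- (s^+2)) * (t^+2 - (a^+2*(a^+2-2*b^+2) - c^+4*u^+2)) + ((b^+4)) * (U^+2 - u^+2) + ((c^+2 * s^+2 * u^+2) + (c^+2 * s^+4) + - (b^+2 * s^+2 * u^+2) + - (b^+2 * s^+4) + (a^+2 * s^+2 * u^+2) + (a^+2 * s^+4)) * (c^+2 - (a^+2-b^+2)) + ((b^+4) + (b^+4 * s^+2) + - (2 * a^+2 * b^+2 * s^+2) + (a^+4 * s^+2)) * (s^+2 - (1-u^+2))); first ring.
by rewrite ?h1 ?h2 ?h3 ?h4 ?h5; ring.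
Qed.

Lemma pid_DD {R : rcfType} {a b c s t u U w : R} :
  w^+2 - t^+2 = 0 -> t^+2 - (a^+2*(a^+2-2*b^+2) - c^+4*u^+2) = 0 ->
  U^+2 - u^+2 = 0 -> c^+2 - (a^+2-b^+2) = 0 -> s^+2 - (1-u^+2) = 0 ->
  (a^+2+(u^+2-2)*c^+2)-(b^+2 - c^+2*s^+2) = 0.
Proof.
move=> h1 h2 h3 h4 h5.
transitivity ((- (2) + (u^+2) + (s^+2)) * (c^+2 - (a^+2-b^+2)) + (- (b^+2) + (a^+2)) * (s^+2 - (1-u^+2))); first ring.
by rewrite ?h1 ?h2 ?h3 ?h4 ?h5; ring.
Qed.

Lemma eq_via {R : rcfType} (p d : R) {x y : R} : x - y = p / d -> p = 0 -> x = y.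
Proof. by move=> h hp; apply/eqP; rewrite -subr_eq0 h hp mul0r. Qed.

Lemma L_rad {R : rcfType} {Z Cc X : R * R} {r : R} :
  sqdist Z Cc = r^+2 -> sqdist X Cc = r^+2 -> sqdist X Z != 0 ->
  on_radical_axis Z 1 Cc r (inversion Z 1 X).
Proof.
case: Z => z1 z2; case: Cc => c1 c2; case: X => x1 x2.
rewrite /on_radical_axis /power /inversion /sqdist /= => h1 h2 hd.
have key : 2 * ((x1-z1)*(c1-z1) + (x2-z2)*(c2-z2)) - ((x1 - z1)^+2 + (x2 - z2)^+2)
   = ((z1-c1)^+2+(z2-c2)^+2) - ((x1-c1)^+2+(x2-c2)^+2) by ring.
rewrite h1 h2 subrr in key.
rewrite -h1.
apply: (eq_via (2 * ((x1-z1)*(c1-z1) + (x2-z2)*(c2-z2)) - ((x1 - z1)^+2 + (x2 - z2)^+2))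
   ((x1 - z1)^+2 + (x2 - z2)^+2)); last exact: key.
fs.
Qed.

Lemma L_col (R : rcfType) (Z Cc : R*R) (r : R) (l : seq (R*R)) :
  Z.1 != Cc.1 -> (forall Y, Y \in l -> on_radical_axis Z 1 Cc r Y) -> collinear l.
Proof.
case: Z => z1 z2; case: Cc => c1 c2 /= hne H.
exists (2*(c1 - z1)), (2*(c2-z2)), (c1^+2 + c2^+2 - r^+2 - z1^+2 - z2^+2 + 1); split.
  apply/negP => /eqP [] /eqP; rewrite mulf_eq0 pnatr_eq0 /= subr_eq0 => /eqP h _.
  by move: hne; rewrite h eqxx.
apply/allP => Y /H; case: Y => y1 y2; rewrite /on_radical_axis /power /sqdist /= => h.
apply/eqP => /=; apply: (eq_via (((y1 - z1)^+2 + (y2 - z2)^+2 - 1^+2) - ((y1 - c1)^+2 + (y2 - c2)^+2 - r^+2)) (1)).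
  rewrite divr1; ring.
by rewrite h subrr.
Qed.

Lemma L_circ {R : rcfType} {X Cc : R*R} {r c : R} : Cc.1 = 0 ->
  r^+2 - Cc.2^+2 = c^+2 -> X.1^+2 + X.2^+2 - 2*X.2*Cc.2 = c^+2 -> sqdist X Cc = r^+2.
Proof.
case: X => x y; case: Cc => m1 m /= -> h1 h2; rewrite /sqdist /=.
have -> : (x-0)^+2 + (y-m)^+2 = (x^+2 + y^+2 - 2*y* m) + m^+2 by ring.
by rewrite h2 -h1; ring.
Qed.

Lemma L_f1 {R : rcfType} {Cc : R*R} {r c : R} : Cc.1 = 0 ->
  r^+2 - Cc.2^+2 = c^+2 -> sqdist (-c, 0) Cc = r^+2.
Proof.
case: Cc => m1 m /= -> h; rewrite /sqdist /=.
have -> : r^+2 = c^+2 + m^+2 by rewrite -h; ring.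
ring.
Qed.

Lemma L_nz2 {R : rcfType} {X Z : R*R} : X.2 != Z.2 -> sqdist X Z != 0.
Proof.
case: X => x1 x2; case: Z => z1 z2 /= h.
rewrite /sqdist /= paddr_eq0 ?sqr_ge0 // negb_and; apply/orP; right.
by rewrite sqrf_eq0 subr_eq0.
Qed.

Lemma L_nzQ {R : rcfType} {a b c U y : R} {Q : R*R} : 0 < a -> 0 < b -> 0 < c -> c < a ->
  U^+2 < 1 -> on_tangent a b (a*U, y) Q -> sqdist Q (-c, 0) != 0.
Proof.
case: Q => q1 q2 ha hb hc hca hU; rewrite /on_tangent /sqdist /= => h.
rewrite paddr_eq0 ?sqr_ge0 // !sqrf_eq0 !subr_eq0.
apply/negP => /andP [/eqP e1 /eqP e2]; subst q1 q2.
have ha0 : a != 0 by rewrite lt0r_neq0.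
have hb0 : b != 0 by rewrite lt0r_neq0.
have : (-c*(a*U)/a^+2 + 0*y/b^+2 - 1) * a = -c*U - a by fs.
rewrite h subrr mul0r => /esym e.
have e2 : c*U = -a by lra.
have e' : (c*U)^+2 = a^+2 by rewrite e2 sqrrN.
nra.
Qed.

Lemma lin2 (R : rcfType) (p q p' q' x y x0 y0 A B : R) : A != 0 -> B != 0 -> p* q' - q* p' != 0 ->
  x* p/A + y* q/B = 1 -> x* p'/A + y* q'/B = 1 -> x0* p/A + y0* q/B = 1 -> x0* p'/A + y0* q'/B = 1 ->
  x = x0 /\ y = y0.
Proof.
move=> hA hB hdet h1 h2 h3 h4.
have e1 : (x - x0)* p/A + (y-y0)* q/B = (x* p/A + y* q/B) - (x0* p/A + y0* q/B) by ring.
rewrite h1 h3 subrr in e1.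
have e2 : (x - x0)* p'/A + (y-y0)* q'/B = (x* p'/A + y* q'/B) - (x0* p'/A + y0* q'/B) by ring.
rewrite h2 h4 subrr in e2.
split.
  have : (x-x0)*(p* q'-q* p')/A = q'*((x - x0)* p/A + (y-y0)* q/B) - q*((x - x0)* p'/A + (y-y0)* q'/B) by ring.
  rewrite e1 e2 !mulr0 subrr => /eqP.
  rewrite !mulf_eq0 invr_eq0 (negbTE hdet) (negbTE hA) !orbF subr_eq0.
  by move/eqP.
have : (y-y0)*(p* q'-q* p')/B = p*((x - x0)* p'/A + (y-y0)* q'/B) - p'*((x - x0)* p/A + (y-y0)* q/B) by ring.
rewrite e1 e2 !mulr0 subrr => /eqP.
rewrite !mulf_eq0 invr_eq0 (negbTE hdet) (negbTE hB) !orbF subr_eq0.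
by move/eqP.
Qed.

Lemma Lsolve {R : rcfType} {a b c s t u U w : R} {Q : R*R} :
  0 < a -> 0 < b -> 0 < c -> 0 < s ->
  w^+2 - t^+2 = 0 -> t^+2 - (a^+2*(a^+2-2*b^+2) - c^+4*u^+2) = 0 ->
  U^+2 - u^+2 = 0 -> c^+2 - (a^+2-b^+2) = 0 -> s^+2 - (1-u^+2) = 0 ->
  b^+2 - c^+2*s^+2 != 0 ->
  on_tangent a b (a*U, b*s) Q ->
  on_tangent a b (a*w/(c^+2*s), -(b^+3)/(c^+2*s)) Q ->
  Q = (a*(U*b^+2 - s*w)/(b^+2 - c^+2*s^+2), b*(s*(b^+2-c^+2)+U*w)/(b^+2 - c^+2*s^+2)).
Proof.
move=> ha hb hc hs h1 h2 h3 h4 h5 hDd.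
case: Q => x y; rewrite /on_tangent /= => e1 e2.
have ha0 : a != 0 by rewrite lt0r_neq0.
have hb0 : b != 0 by rewrite lt0r_neq0.
have hc0 : c != 0 by rewrite lt0r_neq0.
have hs0 : s != 0 by rewrite lt0r_neq0.
have hpos : b^+2 + c^+2*s^+2 != 0.
  by rewrite lt0r_neq0 // addr_gt0 // ?mulr_gt0 // exprn_gt0.
have hsum : U*b^+2 + s*w != 0.
  apply/eqP => hz; have := pid_DET h1 h2 h3 h4 h5; rewrite hz mul0r sub0r => /eqP.
  by rewrite oppr_eq0 mulf_eq0 (negbTE hDd) (negbTE hpos).
have hdet : (a*U) * (-(b^+3)/(c^+2*s)) - (b*s)*(a*w/(c^+2*s)) != 0.
  have -> : (a*U) * (-(b^+3)/(c^+2*s)) - (b*s)*(a*w/(c^+2*s)) = -(a*b*(U*b^+2+s*w))/(c^+2*s) by fs.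
  apply: mulf_neq0.
    by rewrite oppr_eq0; apply: mulf_neq0 => //; exact: mulf_neq0.
  by rewrite invr_eq0; apply: mulf_neq0 => //; exact: expf_neq0.
have c1 : (a*(U*b^+2 - s*w)/(b^+2 - c^+2*s^+2)) * (a*U)/a^+2
        + (b*(s*(b^+2-c^+2)+U*w)/(b^+2 - c^+2*s^+2)) * (b*s)/b^+2 = 1.
  by apply: (eq_via _ (b^+2 - c^+2*s^+2) _ (pid_T1 h1 h2 h3 h4 h5)); fs.
have c2 : (a*(U*b^+2 - s*w)/(b^+2 - c^+2*s^+2)) * (a*w/(c^+2*s))/a^+2
        + (b*(s*(b^+2-c^+2)+U*w)/(b^+2 - c^+2*s^+2)) * (-(b^+3)/(c^+2*s))/b^+2 = 1.
  by apply: (eq_via _ ((b^+2 - c^+2*s^+2)*c^+2*s) _ (pid_T2 h1 h2 h3 h4 h5)); fs.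
have hA : a^+2 != 0 by rewrite expf_neq0.
have hB : b^+2 != 0 by rewrite expf_neq0.
by have [-> ->] := @lin2 _ _ _ _ _ _ _ _ _ _ _ hA hB hdet e1 e2 c1 c2.
Qed.

Lemma LQcirc {R : rcfType} {a b c s t u U w : R} :
  0 < b -> 0 < c -> 0 < s ->
  w^+2 - t^+2 = 0 -> t^+2 - (a^+2*(a^+2-2*b^+2) - c^+4*u^+2) = 0 ->
  U^+2 - u^+2 = 0 -> c^+2 - (a^+2-b^+2) = 0 -> s^+2 - (1-u^+2) = 0 ->
  b^+2 - c^+2*s^+2 != 0 ->
  (a*(U*b^+2 - s*w)/(b^+2 - c^+2*s^+2))^+2 + (b*(s*(b^+2-c^+2)+U*w)/(b^+2 - c^+2*s^+2))^+2
   - 2*(b*(s*(b^+2-c^+2)+U*w)/(b^+2 - c^+2*s^+2)) * (-(2*b*c^+2*s)/(b^+2 - c^+2*s^+2)) = c^+2.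
Proof.
move=> hb hc hs h1 h2 h3 h4 h5 hDd.
by apply: (eq_via _ ((b^+2 - c^+2*s^+2)^+2) _ (pid_Q h1 h2 h3 h4 h5)); fs.
Qed.
Theorem mainTheorem6 (R : rcfType) (a b u : R)
  (Q1 Q2 Q3 Q4 : R * R) :
  0 < b -> b < a -> Num.sqrt 2 < a / b ->
  `|u| < umax a b ->
  a ^+ 2 + (u ^+ 2 - 2) * (cfoc a b) ^+ 2 != 0 ->
  (* Q_i = P_i' : intersection of the tangents at P_i and P_(i+1) *)
  on_tangent a b (P1 a b u) Q1 -> on_tangent a b (P2 a b u) Q1 ->
  on_tangent a b (P2 a b u) Q2 -> on_tangent a b (P3 a b u) Q2 ->
  on_tangent a b (P3 a b u) Q3 -> on_tangent a b (P4 a b u) Q3 ->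
  on_tangent a b (P4 a b u) Q4 -> on_tangent a b (P1 a b u) Q4 ->
  let f1 := (- cfoc a b, 0) in
  let inv := inversion f1 1 in
  (collinear [:: inv (P1 a b u); inv (P2 a b u); inv (P3 a b u); inv (P4 a b u)] /\
   forall X, X \in [:: P1 a b u; P2 a b u; P3 a b u; P4 a b u] ->
     on_radical_axis f1 1 (Ccenter a b u) (Cradius a b u) (inv X)) /\
  (collinear [:: inv Q1; inv Q2; inv Q3; inv Q4] /\
   forall X, X \in [:: Q1; Q2; Q3; Q4] ->
     on_radical_axis f1 1 (C'center a b u) (C'radius a b u) (inv X)).
Proof.
move=> hb hba hsq hu hD h11 h12 h22 h23 h33 h34 h44 h41 f1 inv.
have ha : 0 < a by apply: lt_trans hba.
pose c := cfoc a b.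
pose s := Num.sqrt (1 - u^+2).
pose t := Num.sqrt (a^+2 * (a^+2 - 2*b^+2) - c^+4 * u^+2).
pose g := Num.sqrt (a^+2 - 2*b^+2).
have hab : b^+2 < a^+2 by nra.
have hc2 : c^+2 = a^+2 - b^+2 by rewrite /c /cfoc sqr_sqrtr // subr_ge0 ltW.
have hc : 0 < c by rewrite /c /cfoc sqrtr_gt0 subr_gt0.
have hca : c < a by nra.
have h2b : 2*b^+2 < a^+2.
  have h := hsq; rewrite ltr_pdivlMr // in h.
  have e2 : Num.sqrt 2 ^+ 2 = 2 :> R by rewrite sqr_sqrtr // ler0n.
  have hq : 0 <= Num.sqrt 2 * b by rewrite mulr_ge0 // ?sqrtr_ge0 ?ltW.
  have hh : (Num.sqrt 2 * b)^+2 < a^+2 by nra.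
  by rewrite exprMn e2 in hh.
have hg2 : g^+2 = a^+2 - 2*b^+2 by rewrite /g sqr_sqrtr // subr_ge0 ltW.
have hg : 0 <= g by exact: sqrtr_ge0.
have hc4 : c^+4 = (a^+2 - b^+2)^+2 by rewrite -hc2 -exprM.
have hu2 : c^+4 * u^+2 < a^+2 * (a^+2 - 2*b^+2).
  move: hu; rewrite /umax -/c -/g mulrAC ltr_pdivlMr ?exprn_gt0 // => hu.
  have h0 : 0 <= `|u| * c^+2 by rewrite mulr_ge0 ?normr_ge0 ?sqr_ge0.
  have hh : (`|u| * c^+2)^+2 < (a*g)^+2 by nra.
  have e : (`|u| * c^+2)^+2 = c^+4 * u^+2 by rewrite exprMn real_normK ?num_real //; ring.
  have e' : (a*g)^+2 = a^+2 * (a^+2 - 2*b^+2) by rewrite exprMn hg2.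
  by rewrite e e' in hh.
have hs1 : 0 < 1 - u^+2.
  have hc4p : 0 < c^+4 by rewrite exprn_gt0.
  have hb4 : 0 < b^+4 by rewrite exprn_gt0.
  nra.
have hs2 : s^+2 = 1 - u^+2 by rewrite /s sqr_sqrtr // ltW.
have hs : 0 < s by rewrite /s sqrtr_gt0.
have ht2 : t^+2 = a^+2*(a^+2-2*b^+2) - c^+4*u^+2 by rewrite /t sqr_sqrtr // subr_ge0 ltW.
have r1 : t^+2 - t^+2 = 0 := subrr _.
have r1' : (-t)^+2 - t^+2 = 0 by rewrite sqrrN subrr.
have r2 : t^+2 - (a^+2*(a^+2-2*b^+2) - c^+4*u^+2) = 0 by rewrite ht2 subrr.
have r3 : u^+2 - u^+2 = 0 := subrr _.
have r3' : (-u)^+2 - u^+2 = 0 by rewrite sqrrN subrr.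
have r4 : c^+2 - (a^+2-b^+2) = 0 by rewrite hc2 subrr.
have r5 : s^+2 - (1-u^+2) = 0 by rewrite hs2 subrr.
have ha0 : a != 0 by rewrite lt0r_neq0.
have hb0 : b != 0 by rewrite lt0r_neq0.
have hc0 : c != 0 by rewrite lt0r_neq0.
have hs0 : s != 0 by rewrite lt0r_neq0.
have hu1 : u^+2 < 1 by lra.
have hu1' : (-u)^+2 < 1 by rewrite sqrrN.
have eDD : a^+2 + (u^+2-2)*c^+2 = b^+2 - c^+2*s^+2.
  by apply/eqP; rewrite -subr_eq0; apply/eqP; exact: pid_DD r1 r2 r3 r4 r5.
have hD' : a^+2 + (u^+2-2)*c^+2 != 0 by exact: hD.
have hDd : b^+2 - c^+2*s^+2 != 0 by rewrite -eDD.
have hCr : Cradius a b u ^+2 - (Ccenter a b u).2 ^+2 = c^+2.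
  rewrite /Cradius /Ccenter /= -/c -/s.
  by apply: (eq_via _ (4*b^+2*s^+2) _ (pid_C1 r1 r2 r3 r4 r5)); fs.
have hC1 : (Ccenter a b u).1 = 0 by [].
have hCf1 : sqdist f1 (Ccenter a b u) = Cradius a b u ^+2 := L_f1 hC1 hCr.
have hP1 : sqdist (P1 a b u) (Ccenter a b u) = Cradius a b u ^+2.
  apply: (L_circ hC1 hCr); rewrite /= -/c -/s.
  by apply: (eq_via _ (2*b*s) _ (pid_P1 r1 r2 r3 r4 r5)); fs.
have hP3 : sqdist (P3 a b u) (Ccenter a b u) = Cradius a b u ^+2.
  apply: (L_circ hC1 hCr); rewrite /= -/c -/s.
  by apply: (eq_via _ (2*b*s) _ (pid_P1 r1 r2 r3 r4 r5)); fs.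
have hP2 : sqdist (P2 a b u) (Ccenter a b u) = Cradius a b u ^+2.
  apply: (L_circ hC1 hCr); rewrite /= -/c -/s -/t.
  by apply: (eq_via _ (c^+4*s^+2) _ (pid_P2 r1 r2 r3 r4 r5)); fs.
have hP4 : sqdist (P4 a b u) (Ccenter a b u) = Cradius a b u ^+2.
  apply: (L_circ hC1 hCr); rewrite /= -/c -/s -/t.
  by apply: (eq_via _ (c^+4*s^+2) _ (pid_P2 r1 r2 r3 r4 r5)); fs.
have hP13nz : b * s != 0 by rewrite mulf_neq0.
have hP24nz : - (b^+3) / (c^+2 * s) != 0.
  apply: mulf_neq0; first by rewrite oppr_eq0 expf_neq0.
  by rewrite invr_eq0 mulf_neq0 // expf_neq0.
have hP1nz : sqdist (P1 a b u) f1 != 0 by apply: L_nz2.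
have hP3nz : sqdist (P3 a b u) f1 != 0 by apply: L_nz2.
have hP2nz : sqdist (P2 a b u) f1 != 0 by apply: L_nz2.
have hP4nz : sqdist (P4 a b u) f1 != 0 by apply: L_nz2.
have hCp : C'radius a b u ^+2 - (C'center a b u).2 ^+2 = c^+2.
  rewrite /C'radius /C'center /= -/c -/s real_normK ?num_real //.
  by apply: (eq_via _ ((a^+2 + (u^+2-2)*c^+2)^+2) _ (pid_C2 r1 r2 r3 r4 r5)); fs.
have hC'1 : (C'center a b u).1 = 0 by [].
have hC'f1 : sqdist f1 (C'center a b u) = C'radius a b u ^+2 := L_f1 hC'1 hCp.
have e2 : P2 a b u = (a*(-t)/(c^+2*s), -(b^+3)/(c^+2*s)) by rewrite /P2 mulrN.
have e3 : P3 a b u = (a*(-u), b*s) by rewrite /P3 mulrN.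
rewrite e2 in h12 h22; rewrite e3 in h23 h33.
have hQ1 := Lsolve ha hb hc hs r1' r2 r3 r4 r5 hDd h11 h12.
have hQ2 := Lsolve ha hb hc hs r1' r2 r3' r4 r5 hDd h23 h22.
have hQ3 := Lsolve ha hb hc hs r1 r2 r3' r4 r5 hDd h33 h34.
have hQ4 := Lsolve ha hb hc hs r1 r2 r3 r4 r5 hDd h41 h44.
have hQ1C : sqdist Q1 (C'center a b u) = C'radius a b u ^+2.
  apply: (L_circ hC'1 hCp); rewrite hQ1 /= -/c -/s eDD.
  exact: LQcirc hb hc hs r1' r2 r3 r4 r5 hDd.
have hQ2C : sqdist Q2 (C'center a b u) = C'radius a b u ^+2.
  apply: (L_circ hC'1 hCp); rewrite hQ2 /= -/c -/s eDD.
  exact: LQcirc hb hc hs r1' r2 r3' r4 r5 hDd.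
have hQ3C : sqdist Q3 (C'center a b u) = C'radius a b u ^+2.
  apply: (L_circ hC'1 hCp); rewrite hQ3 /= -/c -/s eDD.
  exact: LQcirc hb hc hs r1 r2 r3' r4 r5 hDd.
have hQ4C : sqdist Q4 (C'center a b u) = C'radius a b u ^+2.
  apply: (L_circ hC'1 hCp); rewrite hQ4 /= -/c -/s eDD.
  exact: LQcirc hb hc hs r1 r2 r3 r4 r5 hDd.
have hQ1nz : sqdist Q1 f1 != 0 := L_nzQ ha hb hc hca hu1 h11.
have hQ2nz : sqdist Q2 f1 != 0 := L_nzQ ha hb hc hca hu1' h23.
have hQ3nz : sqdist Q3 f1 != 0 := L_nzQ ha hb hc hca hu1' h33.
have hQ4nz : sqdist Q4 f1 != 0 := L_nzQ ha hb hc hca hu1 h41.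
have radP : forall X, X \in [:: P1 a b u; P2 a b u; P3 a b u; P4 a b u] ->
   on_radical_axis f1 1 (Ccenter a b u) (Cradius a b u) (inv X).
  move=> X; rewrite !inE => /or4P [] /eqP ->.
  - exact: L_rad hCf1 hP1 hP1nz.
  - exact: L_rad hCf1 hP2 hP2nz.
  - exact: L_rad hCf1 hP3 hP3nz.
  - exact: L_rad hCf1 hP4 hP4nz.
have radQ : forall X, X \in [:: Q1; Q2; Q3; Q4] ->
   on_radical_axis f1 1 (C'center a b u) (C'radius a b u) (inv X).
  move=> X; rewrite !inE => /or4P [] /eqP ->.
  - exact: L_rad hC'f1 hQ1C hQ1nz.
  - exact: L_rad hC'f1 hQ2C hQ2nz.
  - exact: L_rad hC'f1 hQ3C hQ3nz.
  - exact: L_rad hC'f1 hQ4C hQ4nz.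
have hf1 : f1.1 != 0 by rewrite /f1 /= oppr_eq0.
split; split => //.
- apply: (@L_col _ f1 (Ccenter a b u) (Cradius a b u)) => //.
  move=> Y; rewrite !inE => /or4P [] /eqP ->; apply: radP; by rewrite !inE eqxx ?orbT.
- apply: (@L_col _ f1 (C'center a b u) (C'radius a b u)) => //.
  move=> Y; rewrite !inE => /or4P [] /eqP ->; apply: radQ; by rewrite !inE eqxx ?orbT.
Qed.
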